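(* Let $(\mathcal E,B,\mathcal L_{\mathcal P})$ be an epistemic space, $\mathcal S$ a set of agents, and $\Phi\mapsto\succeq_\Phi$ an assignment satisfying Properties 3 and 4. Then the assignment satisfies Property 2 if and only if it satisfies the Maximality Condition.
   Context: An epistemic space: $\mathcal E$ nonempty, $B:\mathcal E\to\mathcal L_{\mathcal P}$ whose image modulo equivalence is exactly the consistent propositional formulas over a finite variable set $\mathcal P$; $\mathcal W_{\mathcal P}$ valuations, $[\![\phi]\!]$ models. Agents: well-ordered set $\mathcal S$; society: nonempty finite $N\subseteq\mathcal S$; $N$-profile: $\Phi:N\to\mathcal E$ with $E_i=\Phi(i)$, identified with $E_i$ when $N=\{i\}$; $\Phi\upharpoonright_M$ restriction; partition $\{N_1,N_2\}$ of $N$: nonempty disjoint sets with union $N$. An assignment maps each profile $\Phi$ to a total preorder $\succeq_\Phi$ on $\mathcal W_{\mathcal P}$ ($\succ$ strict part; $\max(\succeq)$ the set of maximal elements). Properties, for all societies $N$, partitions $\{N_1,N_2\}$, $N$-profiles $\Phi$, interpretations $w,w'$: (2) if $\bigwedge_{i\in N}B(E_i)\nvdash\bot$ then $[\![\bigwedge_{i\in N}B(E_i)]\!]=\max(\succeq_\Phi)$; (3) if $w\succeq_{\Phi\upharpoonright_{N_1}}w'$ and $w\succeq_{\Phi\upharpoonright_{N_2}}w'$ then $w\succeq_\Phi w'$; (4) if $w\succeq_{\Phi\upharpoonright_{N_1}}w'$ and $w\succ_{\Phi\upharpoonright_{N_2}}w'$ then $w\succ_\Phi w'$. Maximality Condition: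 for every agent $i$ and every $i$-profile $E_i$, $[\![B(E_i)]\!]=\max(\succeq_{E_i})$. *)

(* Defs.v *)
From mathcomp Require Import all_boot.
From Stdlib Require List.
Set Implicit Arguments. Unset Strict Implicit. Unset Printing Implicit Defensive.

Inductive form (P : finType) : Type :=
| FVar of P
| FTop
| FBot
| FNot of form P
| FAnd of form P & form P
| FOr of form P & form P
| FImp of form P & form P.

Definition valuation (P : finType) := P -> bool.

Fixpoint sat (P : finType) (w : valuation P) (f : form P) : Prop :=
  match f with
  | FVar p => w p = true
  | FTop => True
  | FBot => False
  | FNot g => ~ sat w g
  | FAnd g h => sat w g /\ sat w h
  | FOr g h => sat w g \/ sat w h
  | FImp g h => sat w g -> sat w h
  end.

(** consistency (phi |/- bot) and equivalence, semantically (sound & complete) *)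
Definition consistent (P : finType) (f : form P) : Prop := exists w, sat w f.
Definition form_equiv (P : finType) (f g : form P) : Prop :=
  forall w, sat w f <-> sat w g.

Definition epistemic_space (P : finType) (E : Type) (B : E -> form P) : Prop :=
  inhabited E /\
  (forall e, consistent (B e)) /\
  (forall f, consistent f -> exists e, form_equiv (B e) f).

Definition well_order (S : Type) (lt : S -> S -> Prop) : Prop :=
  well_founded lt /\
  (forall x, ~ lt x x) /\
  (forall x y z, lt x y -> lt y z -> lt x z) /\
  (forall x y, lt x y \/ x = y \/ lt y x).

Definition society (S : Type) (N : S -> Prop) : Prop :=
  (exists l : list S, forall i, N i <-> List.In i l) /\ (exists i, N i).

Definition partition2 (S : Type) (N N1 N2 : S -> Prop) : Prop :=
  (exists i, N1 i) /\ (exists i, N2 i) /\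
  (forall i, N1 i -> N2 i -> False) /\
  (forall i, N i <-> N1 i \/ N2 i).

(** An N-profile is represented by a total function Phi : S -> E, of which
    only the values on N matter; an assignment takes a society N and such a
    Phi, and must not depend on values outside N. Hence restriction of a
    profile Phi to M is just (M, Phi). *)
Definition assignmentT (S E W : Type) := (S -> Prop) -> (S -> E) -> W -> W -> Prop.

Definition total_preorder (W : Type) (R : W -> W -> Prop) : Prop :=
  (forall x y z, R x y -> R y z -> R x z) /\ (forall x y, R x y \/ R y x).

Definition strict (W : Type) (R : W -> W -> Prop) (x y : W) : Prop :=
  R x y /\ ~ R y x.

Definition maxset (W : Type) (R : W -> W -> Prop) (w : W) : Prop :=
  forall w', R w w'.

Definition is_assignment (S E W : Type) (A : assignmentT S E W) : Prop :=
  (forall N Phi, society N -> total_preorder (A N Phi)) /\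
  (forall N Phi Psi, society N -> (forall i, N i -> Phi i = Psi i) ->
     forall w w', A N Phi w w' <-> A N Psi w w').

Definition conj_models (P : finType) (S E : Type) (B : E -> form P)
  (N : S -> Prop) (Phi : S -> E) (w : valuation P) : Prop :=
  forall i, N i -> sat w (B (Phi i)).

Definition property2 (P : finType) (S E : Type) (B : E -> form P)
  (A : assignmentT S E (valuation P)) : Prop :=
  forall N Phi, society N ->
    (exists w, conj_models B N Phi w) ->
    forall w, conj_models B N Phi w <-> maxset (A N Phi) w.

Definition property3 (S E W : Type) (A : assignmentT S E W) : Prop :=
  forall N N1 N2 Phi, society N -> partition2 N N1 N2 ->
    forall w w', A N1 Phi w w' -> A N2 Phi w w' -> A N Phi w w'.

Definition property4 (S E W : Type) (A : assignmentT S E W) : Prop :=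
  forall N N1 N2 Phi, society N -> partition2 N N1 N2 ->
    forall w w', A N1 Phi w w' -> strict (A N2 Phi) w w' ->
      strict (A N Phi) w w'.

Definition single (S : Type) (i : S) : S -> Prop := fun j => j = i.

Definition maximality_condition (P : finType) (S E : Type) (B : E -> form P)
  (A : assignmentT S E (valuation P)) : Prop :=
  forall (i : S) (Phi : S -> E) (w : valuation P),
    sat w (B (Phi i)) <-> maxset (A (single i) Phi) w.

(* Main.v *)
From Stdlib Require Import Classical ClassicalEpsilon FunctionalExtensionality PropExtensionality List Lia.
Require Import Defs.
From mathcomp Require Import all_boot.
Set Implicit Arguments. Unset Strict Implicit.

Definition Gp (P : finType) (S E : Type) (B : E -> form P)
  (A : assignmentT S E (valuation P)) (N : S -> Prop) : Prop :=
  forall Phi, (exists w, conj_models B N Phi w) ->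
    forall w, conj_models B N Phi w <-> Defs.maxset (A N Phi) w.

Lemma part_sym (S : Type) (N N1 N2 : S -> Prop) :
  partition2 N N1 N2 -> partition2 N N2 N1.
Proof.
  move=> [h1 [h2 [h3 h4]]]; split; [|split; [|split]] => //.
  - move=> i a b; exact: (h3 i b a).
  - move=> i; rewrite h4; tauto.
Qed.

Lemma combine (P : finType) (S E : Type) (B : E -> form P)
  (A : assignmentT S E (valuation P)) N N1 N2 :
  is_assignment A -> property3 A -> property4 A ->
  society N -> society N1 -> society N2 -> partition2 N N1 N2 ->
  Gp B A N1 -> Gp B A N2 -> Gp B A N.
Proof.
  move=> [tot _] p3 p4 sN sN1 sN2 pt G1 G2 Phi [w0 Hw0] w.
  have pt' := pt. move: pt' => [_ [_ [_ hN]]].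
  have sub1 : forall v, conj_models B N Phi v -> conj_models B N1 Phi v.
    by move=> v H i Hi; apply: H; rewrite hN; left.
  have sub2 : forall v, conj_models B N Phi v -> conj_models B N2 Phi v.
    by move=> v H i Hi; apply: H; rewrite hN; right.
  have e1 : exists v, conj_models B N1 Phi v by exists w0; exact: sub1.
  have e2 : exists v, conj_models B N2 Phi v by exists w0; exact: sub2.
  have m1 := proj1 (G1 Phi e1 w0) (sub1 _ Hw0).
  have m2 := proj1 (G2 Phi e2 w0) (sub2 _ Hw0).
  split.
  - move=> Hw w'. apply: (p3 N N1 N2 Phi sN pt).
    + exact: (proj1 (G1 Phi e1 w) (sub1 _ Hw)).
    + exact: (proj1 (G2 Phi e2 w) (sub2 _ Hw)).
  - move=> Hmax.
    have gen : forall M M' (GM : Gp B A M) (eM : exists v, conj_models B M Phi v),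
      society M -> partition2 N M' M -> Defs.maxset (A M Phi) w0 -> Defs.maxset (A M' Phi) w0 ->
      conj_models B M Phi w.
    { move=> M M' GM eM sM pM mM mM'. apply/(GM Phi eM w).
      apply: NNPP => Hn.
      have [w'' Hw''] : exists w'', ~ A M Phi w w''.
        by apply: not_all_ex_not.
      have [tr _] := tot M Phi sM.
      have st : strict (A M Phi) w0 w.
        split; first exact: mM.
        move=> H; apply: Hw''; apply: tr H (mM w'').
      have := p4 N M' M Phi sN pM w0 w (mM' w) st.
      by move=> [_ H]; apply: H; apply: Hmax. }
    move=> i Hi. move: (Hi); rewrite hN => -[H|H].
    + exact: (gen N1 N2 G1 e1 sN1 (part_sym pt) m1 m2 i H).
    + exact: (gen N2 N1 G2 e2 sN2 pt m2 m1 i H).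
Qed.

Theorem mainTheorem6 (P : finType) (E : Type) (B : E -> form P)
  (S : Type) (ltS : S -> S -> Prop)
  (A : assignmentT S E (valuation P)) :
  epistemic_space B -> well_order ltS -> is_assignment A ->
  property3 A -> property4 A ->
  (property2 B A <-> maximality_condition B A).
Proof.
  move=> [_ [cons _]] _ asg p3 p4.
  have sS : forall a : S, society (single a).
    move=> a; split; [exists (a :: nil) => i; rewrite /single /=; split; [by left|by case] | by exists a].
  have cmS : forall a Phi w, conj_models B (single a) Phi w <-> sat w (B (Phi a)).
    move=> a Phi w; split; [by move=> H; apply: H | by move=> H i ->].
  split.
  - move=> p2 i Phi w. rewrite -cmS. apply: p2 => //.
    have [v Hv] := cons (Phi i). exists v; by apply/cmS.
  - move=> mc.
    have dec : forall x y : S, {x = y} + {x <> y}.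
      by move=> x y; apply: excluded_middle_informative.
    have key : forall n (l : list S) N, length l <= n -> (forall i, N i <-> In i l) ->
        (exists i, N i) -> Gp B A N.
    { elim=> [|n IH] l N Hl HN [i Hi].
      - by case: l Hl HN => [|??] //= _ HN; move: Hi; rewrite HN.
      - case: l Hl HN => [|a l'] Hl HN; first by move: Hi; rewrite HN.
        set N2 := fun j => N j /\ j <> a.
        have L2 : forall j, N2 j <-> In j (remove dec a l').
          move=> j; rewrite /N2 HN /=; split.
          + by move=> [[->|?] ?]; [|apply: in_in_remove].
          + by move=> H; have [? ?] := in_remove _ _ _ _ H; split; [right|].
        have Na : N a by rewrite HN /=; left.
        case: (classic (exists j, N2 j)) => [ex|nex].
        + have sN2 : society N2 by split; [exists (remove dec a l')|].
          have sN : society N by split; [exists (a :: l')|exists a].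
          have pt : partition2 N (single a) N2.
            split; [by exists a|split; [exact ex|split]].
            * by move=> j -> [_ H].
            * move=> j; rewrite /single /N2; split.
              -- move=> Hj; case: (dec j a) => [->|ne]; [by left|by right].
              -- by move=> [->|[]].
          apply: (combine asg p3 p4 sN (sS a) sN2 pt).
          * move=> Phi _ w; rewrite cmS; exact: mc.
          * apply: (IH (remove dec a l') N2) => //.
            move: Hl => /=; rewrite ltnS => Hl; apply: leq_trans Hl; apply/leP; exact: remove_length_le.
        + have eN : N = single a.
            apply: functional_extensionality => j; apply: propositional_extensionality.
            rewrite /single; split; last by move=> ->.
            move=> Hj; apply: NNPP => ne; apply: nex; exists j; by split.
          rewrite eN => Phi _ w; rewrite cmS; exact: mc. }
    move=> N Phi [[l Hl] ne] ex.
    exact: (key (length l) l N (leqnn _) Hl ne Phi ex).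
Qed.
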